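(* For a right $R$-module $M$ the following are equivalent: (a) $M$ is quasi-projective and finite $\Sigma$-Rickart; (b) every finitely $M$-generated submodule of any module in $\mathrm{add}(M)$ is $M$-projective; (c) every finitely $M$-generated submodule of any module in $\mathrm{add}(M)$ is quasi-projective.
   Context: Modules are unitary right $R$-modules; $M^{(n)}$ is the direct sum of $n$ copies of $M$. $M$ is Rickart if $\ker\varphi$ is a direct summand of $M$ for all $\varphi\in\mathrm{End}_R(M)$; $M$ is finite $\Sigma$-Rickart if $M^{(n)}$ is Rickart for all $n>0$. $\mathrm{add}(M)$ is the class of modules isomorphic to a direct summand of $M^{(n)}$ for some integer $n>0$. A module $N$ is finitely $M$-generated if there is an epimorphism $M^{(n)}\to N$ for some $n>0$. A module is quasi-projective if it is projective relative to itself. *)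

(* Defs.v *)
From HB Require Import structures.
From mathcomp Require Import all_boot all_order all_algebra.
Set Implicit Arguments. Unset Strict Implicit. Unset Printing Implicit Defensive.
Import GRing.Theory.
Local Open Scope ring_scope.

(* Right R-modules are modelled as left modules over the converse ring R^c. *)
Notation rmodType R := (lmodType (R^c)).

Notation dsum M n := ({ffun 'I_n -> M})%type.

Definition surj (A B : Type) (f : A -> B) : Prop := forall y, exists x, f x = y.

Definition relproj (R : pzRingType) (M N : rmodType R) : Prop :=
  forall (L : rmodType R) (g : {linear M -> L}) (f : {linear N -> L}),
    surj g -> exists h : {linear N -> M}, forall x, g (h x) = f x.

Definition quasi_proj (R : pzRingType) (M : rmodType R) : Prop := relproj M M.

Definition is_submod (R : pzRingType) (M : rmodType R) (S : M -> Prop) : Prop :=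
  [/\ S 0, (forall x y, S x -> S y -> S (x + y)) & (forall (a : R^c) x, S x -> S (a *: x))].

Definition direct_summand (R : pzRingType) (M : rmodType R) (S : M -> Prop) : Prop :=
  is_submod S /\
  exists C : M -> Prop, [/\ is_submod C,
    (forall x, S x -> C x -> x = 0) &
    (forall x, exists a b, [/\ S a, C b & x = a + b])].

Definition rickart (R : pzRingType) (M : rmodType R) : Prop :=
  forall phi : {linear M -> M}, direct_summand (fun x => phi x = 0).

Definition fin_sigma_rickart (R : pzRingType) (M : rmodType R) : Prop :=
  forall n : nat, (0 < n)%N -> rickart (dsum M n).

(* X in add(M): X is isomorphic (via f onto its image) to a direct summand of M^(n). *)
Definition in_add (R : pzRingType) (M X : rmodType R) : Prop :=
  exists n : nat, (0 < n)%N /\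
  exists f : {linear X -> dsum M n}, injective f /\ direct_summand (fun y => exists x, f x = y).

(* K is (up to isomorphism) a finitely M-generated submodule of X:
   K embeds into X and there is an epimorphism M^(n) -> K. *)
Definition fin_M_gen_sub (R : pzRingType) (M X K : rmodType R) : Prop :=
  (exists i : {linear K -> X}, injective i) /\
  exists n : nat, (0 < n)%N /\ exists p : {linear dsum M n -> K}, surj p.

(* Main.v *)
Require Import Defs.
From HB Require Import structures.
From mathcomp Require Import all_boot all_order all_algebra.
From Stdlib Require Import ClassicalEpsilon.
Import GRing.Theory.
Set Implicit Arguments. Unset Strict Implicit. Unset Printing Implicit Defensive.

Section Aux.
Local Open Scope ring_scope.

Definition pb (P : Prop) : bool := if excluded_middle_informative P then true else false.
Lemma pbE (P : Prop) : pb P = true <-> P.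
Proof. by rewrite /pb; case: excluded_middle_informative. Qed.

Definition canon (R : pzRingType) (L : rmodType R) (U : L -> Prop) (x : L) : L :=
  choose (fun y => pb (U (y - x))) x.

Variables (R : pzRingType) (L : rmodType R) (U : L -> Prop) (HU : is_submod U).

Lemma U0 : U 0. Proof. by case: HU. Qed.
Lemma UD x y : U x -> U y -> U (x + y). Proof. by case: HU => _ H _; apply: H. Qed.
Lemma UZ a x : U x -> U (a *: x). Proof. by case: HU => _ _ H; apply: H. Qed.
Lemma UN x : U x -> U (- x). Proof. by move=> Ux; rewrite -scaleN1r; apply: UZ. Qed.
Lemma UB x y : U x -> U y -> U (x - y). Proof. by move=> ? ?; apply: UD => //; apply: UN. Qed.

Lemma canonP x : U (canon U x - x).
Proof. by apply/pbE; apply: (@chooseP _ (fun y => pb (U (y - x)))); apply/pbE; rewrite subrr; apply: U0. Qed.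

Lemma canon_eq x x' : U (x - x') -> canon U x = canon U x'.
Proof.
move=> Hx; rewrite /canon.
have E : (fun y => pb (U (y - x))) =1 (fun y => pb (U (y - x'))).
  move=> y /=; apply/idP/idP => /pbE H; apply/pbE.
    by have := UD H Hx; rewrite addrA subrK.
  by have := UB H Hx; rewrite opprB addrA subrK.
rewrite (eq_choose E); apply: choose_id; apply/pbE.
  by [].

by rewrite subrr; apply: U0.
Qed.

Lemma canonK x : canon U (canon U x) = canon U x.
Proof. by apply: canon_eq; apply: canonP. Qed.
End Aux.

Definition quot (R : pzRingType) (L : rmodType R) (U : L -> Prop) (HU : is_submod U) :=
  {x : L | canon U x == x}.

HB.instance Definition _ R L U HU := Choice.on (@quot R L U HU).

Section Quot.
Local Open Scope ring_scope.
Variables (R : pzRingType) (L : rmodType R) (U : L -> Prop) (HU : is_submod U).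

Definition mk (x : L) : quot HU := exist _ (canon U x) (introT eqP (canonK HU x)).

Lemma mk_eq x y : U (x - y) -> mk x = mk y.
Proof. by move=> H; apply: val_inj => /=; apply: canon_eq. Qed.
Lemma mk_eqE x y : mk x = mk y -> U (x - y).
Proof.
move=> /(congr1 val) /= E.
have H1 := canonP HU x; have H2 := canonP HU y.
rewrite E in H1.
suff -> : x - y = (canon U y - y) - (canon U y - x) by apply: UB.
by rewrite opprB [RHS]addrC addrA subrK.
Qed.
Lemma mkval (q : quot HU) : mk (val q) = q.
Proof. by apply: val_inj => /=; apply/eqP; apply: (valP q). Qed.

Definition zeroq : quot HU := mk 0.
Definition addq (a b : quot HU) : quot HU := mk (val a + val b).
Definition oppq (a : quot HU) : quot HU := mk (- val a).
Definition scaleq (r : R^c) (a : quot HU) : quot HU := mk (r *: val a).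

Lemma mkD x y : addq (mk x) (mk y) = mk (x + y).
Proof.
apply: mk_eq => /=; rewrite opprD addrACA.
by apply: (UD HU); apply: (canonP HU).
Qed.
Lemma mkN x : oppq (mk x) = mk (- x).
Proof. by apply: mk_eq => /=; rewrite opprK addrC -opprB; apply: (UN HU); apply: (canonP HU). Qed.
Lemma mkZ r x : scaleq r (mk x) = mk (r *: x).
Proof. by apply: mk_eq => /=; rewrite -scalerBr; apply: (UZ HU); apply: (canonP HU). Qed.

Lemma addqA : associative addq.
Proof. by move=> a b c; rewrite -[a]mkval -[b]mkval -[c]mkval !mkD addrA. Qed.
Lemma addqC : commutative addq.
Proof. by move=> a b; rewrite -[a]mkval -[b]mkval !mkD addrC. Qed.
Lemma add0q : left_id zeroq addq.
Proof. by move=> a; rewrite -[a]mkval /zeroq mkD add0r. Qed.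
Lemma addNq : left_inverse zeroq oppq addq.
Proof. by move=> a; rewrite -[a]mkval mkN mkD addNr. Qed.

HB.instance Definition _ := GRing.isZmodule.Build (quot HU) addqA addqC add0q addNq.

Lemma mkD' x y : mk x + mk y = mk (x + y) :> quot HU.
Proof. exact: mkD. Qed.

Lemma scaleqA a b v : scaleq a (scaleq b v) = scaleq (a * b) v.
Proof. by rewrite -[v]mkval !mkZ scalerA. Qed.
Lemma scale1q : left_id 1 scaleq.
Proof. by move=> v; rewrite -[v]mkval !mkZ scale1r. Qed.
Lemma scaleqDr : right_distributive scaleq (@GRing.add (quot HU)).
Proof. by move=> a u v; rewrite -[u]mkval -[v]mkval mkD' !mkZ mkD' scalerDr. Qed.
Lemma scaleqDl v : {morph scaleq^~ v: a b / a + b}.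
Proof. by move=> a b; rewrite -[v]mkval !mkZ mkD' scalerDl. Qed.

HB.instance Definition _ := GRing.Zmodule_isLmodule.Build (R^c) (quot HU) scaleqA scale1q scaleqDr scaleqDl.

Lemma mk_lin : linear (mk : L -> quot HU).
Proof. by move=> a x y; rewrite -mkD' -mkZ. Qed.
End Quot.

Section Rel.
Local Open Scope ring_scope.
Variable R : pzRingType.

Definition mkLin (U V : rmodType R) (f : U -> V) (H : linear f) : {linear U -> V} :=
  HB.pack f (GRing.isLinear.Build (R^c) U V *:%R f H).

Lemma mkLinE (U V : rmodType R) f H x : @mkLin U V f H x = f x. Proof. by []. Qed.

Lemma lin_comp (U V W : rmodType R) (g : {linear V -> W}) (f : {linear U -> V}) :
  linear (fun x => g (f x)).
Proof. by move=> a x y; rewrite !linearP. Qed.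

Lemma relproj_epi (A B N : rmodType R) (e : {linear A -> B}) :
  surj e -> relproj A N -> relproj B N.
Proof.
move=> se HA L g f sg.
have sge : surj (mkLin (lin_comp g e)).
  move=> y; have [b <-] := sg y; have [a <-] := se b; by exists a.
have [h Hh] := HA L _ f sge.
by exists (mkLin (lin_comp e h)) => x; rewrite mkLinE -Hh.
Qed.

Lemma relproj_retract (A N N' : rmodType R) (s : {linear N' -> N}) (p : {linear N -> N'}) :
  (forall x, p (s x) = x) -> relproj A N -> relproj A N'.
Proof.
move=> ps HA L g f sg.
have [h Hh] := HA L g (mkLin (lin_comp f p)) sg.
by exists (mkLin (lin_comp h s)) => x; rewrite mkLinE Hh mkLinE ps.
Qed.

Lemma kernel_submod (A L : rmodType R) (g : {linear A -> L}) : is_submod (fun a => g a = 0).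
Proof.
split; first exact: linear0.
  by move=> x y /= Hx Hy; rewrite linearD Hx Hy addr0.
by move=> a x /= Hx; rewrite linearZ_LR Hx scaler0.
Qed.

Lemma relproj_partial (A N L : rmodType R) (g : {linear A -> L}) (f : {linear N -> L}) :
  relproj A N -> (forall x, exists a, g a = f x) ->
  exists h : {linear N -> A}, forall x, g (h x) = f x.
Proof.
move=> HA H.
pose HU := kernel_submod g.
pose pre x := proj1_sig (constructive_indefinite_description _ (H x)).
have preP x : g (pre x) = f x by rewrite /pre; case: constructive_indefinite_description.
pose pi := mkLin (mk_lin HU).
have lf : linear (fun x => mk HU (pre x)).
  move=> a x y; rewrite -(mk_lin HU); apply: mk_eq.
  by rewrite linearB linearP !preP linearP subrr.
have spi : surj pi by move=> q; exists (val q); rewrite mkLinE mkval.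
have [h Hh] := HA _ pi (mkLin lf) spi.
exists h => x; have := Hh x; rewrite !mkLinE => /(mk_eqE) /=.
by rewrite linearB preP => /eqP; rewrite subr_eq0 => /eqP.
Qed.

Lemma relproj_prod (A B N : rmodType R) :
  relproj A N -> relproj B N -> relproj (A * B)%type N.
Proof.
move=> HA HB L g f sg.
pose U := fun l : L => exists a : A, g (a, 0) = l.
have HU : is_submod U.
  split; first by exists 0; rewrite -[(0,0)]/(0 : (A * B)%type) linear0.
    move=> x y [a <-] [b <-]; exists (a + b).
    by rewrite -linearD; congr (g _); apply: injective_projections; rewrite /= ?addr0.
  move=> r x [a <-]; exists (r *: a).
  by rewrite -linearZ_LR; congr (g _); apply: injective_projections; rewrite /= ?scaler0.
have lg1 : linear (fun a : A => g (a, 0)).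
  move=> r x y; rewrite -linearP; congr (g _).
  by apply: injective_projections; rewrite /= ?scaler0 ?addr0.
have lg2 : linear (fun b : B => mk HU (g (0, b))).
  move=> r x y; rewrite -(mk_lin HU) -linearP; congr (mk _ (g _)).
  by apply: injective_projections; rewrite /= ?scaler0 ?addr0.
have lf2 : linear (fun x => mk HU (f x)).
  by move=> r x y; rewrite -(mk_lin HU) linearP.
have sg2 : surj (mkLin lg2).
  move=> q; have [[a b] Eab] := sg (val q); exists b; rewrite mkLinE -[RHS]mkval.
  apply: mk_eq; exists (- a); rewrite -Eab -linearB; congr (g _).
  by apply: injective_projections; rewrite /= ?sub0r ?subrr.
have [h2 Hh2] := HB _ _ (mkLin lf2) sg2.
have lf1 : linear (fun x => f x - g (0, h2 x)).
  move=> r x y; rewrite !linearP.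
  have -> : (0, r *: h2 x + h2 y) = r *: (0, h2 x) + (0, h2 y) :> (A * B)%type.
    by apply: injective_projections; rewrite /= ?scaler0 ?addr0.
  rewrite linearP scalerBr opprD addrACA.
  by congr (_ + _); rewrite addrACA.
have Hp : forall x, exists a, mkLin lg1 a = mkLin lf1 x.
  move=> x; rewrite mkLinE /=.
  by have := Hh2 x; rewrite !mkLinE => /esym /mk_eqE.
have [h1 Hh1] := @relproj_partial A N L (mkLin lg1) (mkLin lf1) HA Hp.
have lh : linear (fun x => (h1 x, h2 x) : (A * B)%type).
  by move=> r x y; apply: injective_projections; rewrite /= linearP.
exists (mkLin lh) => x; rewrite mkLinE.
have -> : (h1 x, h2 x) = (h1 x, 0) + (0, h2 x) :> (A * B)%type.
  by apply: injective_projections; rewrite /= ?addr0 ?add0r.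
by rewrite linearD; have := Hh1 x; rewrite !mkLinE => ->; rewrite subrK.
Qed.


Lemma lin0 (U V : rmodType R) : linear (fun _ : U => 0 : V).
Proof. by move=> r x y; rewrite scaler0 addr0. Qed.

Lemma relproj_prod2 (A N1 N2 : rmodType R) :
  relproj A N1 -> relproj A N2 -> relproj A (N1 * N2)%type.
Proof.
move=> H1 H2 L g f sg.
have l1 : linear (fun x : N1 => f (x, 0)).
  move=> r x y; rewrite -linearP; congr (f _).
  by apply: injective_projections; rewrite /= ?scaler0 ?addr0.
have l2 : linear (fun x : N2 => f (0, x)).
  move=> r x y; rewrite -linearP; congr (f _).
  by apply: injective_projections; rewrite /= ?scaler0 ?addr0.
have [h1 Hh1] := H1 L g (mkLin l1) sg.
have [h2 Hh2] := H2 L g (mkLin l2) sg.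
have lh : linear (fun p : (N1 * N2)%type => h1 p.1 + h2 p.2).
  by move=> r x y; rewrite /= !linearP scalerDr addrACA.
exists (mkLin lh) => [[x y]]; rewrite mkLinE /= linearD Hh1 Hh2 !mkLinE -linearD.
by congr (f _); apply: injective_projections; rewrite /= ?addr0 ?add0r.
Qed.

Lemma dsum0 (T : rmodType R) (v : dsum T 0) : v = 0.
Proof. by apply/ffunP => -[]. Qed.

Definition hdtl (T : rmodType R) n (v : dsum T n.+1) : (T * dsum T n)%type :=
  (v ord0, [ffun i => v (lift ord0 i)]).
Definition cons_ (T : rmodType R) n (p : (T * dsum T n)%type) : dsum T n.+1 :=
  [ffun i => if unlift ord0 i is Some j then p.2 j else p.1].

Lemma hdtl_lin (T : rmodType R) n : linear (@hdtl T n).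
Proof.
move=> r x y; apply: injective_projections; rewrite /= ?ffunE //.
by apply/ffunP => i; rewrite !ffunE.
Qed.
Lemma cons_lin (T : rmodType R) n : linear (@cons_ T n).
Proof.
move=> r x y; apply/ffunP => i; rewrite !ffunE.
by case: unlift => [j|] //=; rewrite !ffunE.
Qed.
Lemma cons_hdtl (T : rmodType R) n v : @cons_ T n (hdtl v) = v.
Proof.
by apply/ffunP => i; rewrite !ffunE /=; case: unliftP => [j ->|->] //; rewrite ffunE.
Qed.

Lemma relproj_dsumL (M N : rmodType R) n : relproj M N -> relproj (dsum M n) N.
Proof.
move=> HM; elim: n => [|n IH].
  move=> L g f sg; exists (mkLin (@lin0 N (dsum M 0))) => x; rewrite mkLinE.
  have [v Hv] := sg (f x); by rewrite -Hv (dsum0 v) !linear0.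
apply: (@relproj_epi (M * dsum M n)%type _ _ (mkLin (@cons_lin M n))).
  by move=> v; exists (hdtl v); rewrite mkLinE cons_hdtl.
exact: relproj_prod.
Qed.

Lemma relproj_dsumR (A N : rmodType R) n : relproj A N -> relproj A (dsum N n).
Proof.
move=> HN; elim: n => [|n IH].
  move=> L g f sg; exists (mkLin (@lin0 _ A)) => x; rewrite mkLinE.
  by rewrite (dsum0 x) !linear0.
apply: (@relproj_retract A (N * dsum N n)%type _ (mkLin (@hdtl_lin N n)) (mkLin (@cons_lin N n))).
  by move=> v; rewrite !mkLinE cons_hdtl.
exact: relproj_prod2.
Qed.

End Rel.

Section Main.
Local Open Scope ring_scope.
Variable R : pzRingType.

Definition splitv (T : rmodType R) n m (v : dsum T (n + m)) : (dsum T n * dsum T m)%type :=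
  ([ffun i => v (lshift m i)], [ffun j => v (rshift n j)]).
Definition catv (T : rmodType R) n m (p : (dsum T n * dsum T m)%type) : dsum T (n + m) :=
  [ffun k => match split k with inl i => p.1 i | inr j => p.2 j end].

Lemma splitv_lin (T : rmodType R) n m : linear (@splitv T n m).
Proof.
by move=> r x y; apply: injective_projections; apply/ffunP => i; rewrite /= !ffunE.
Qed.
Lemma catv_lin (T : rmodType R) n m : linear (@catv T n m).
Proof.
move=> r x y; apply/ffunP => k; rewrite !ffunE.
by case: split => [i|j] /=; rewrite !ffunE.
Qed.
Lemma catvK (T : rmodType R) n m v : @catv T n m (splitv v) = v.
Proof.
apply/ffunP => k; rewrite ffunE -[in RHS](splitK k).
by case: (split k) => [i|j] /=; rewrite ffunE.
Qed.
Lemma splitvK (T : rmodType R) n m p : @splitv T n m (catv p) = p.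
Proof.
case: p => a b; apply: injective_projections; apply/ffunP => i; rewrite /= !ffunE.
  by rewrite -[lshift m i]/(unsplit (inl i)) unsplitK.
by rewrite -[rshift n i]/(unsplit (inr i)) unsplitK.
Qed.

Lemma ds_ext (T : rmodType R) (S S' : T -> Prop) :
  (forall x, S x <-> S' x) -> direct_summand S -> direct_summand S'.
Proof.
move=> E [[S0 SD SZ] [C [HC HI HD]]]; split.
  split; first by apply/E.
    by move=> x y /E Hx /E Hy; apply/E; apply: SD.
  by move=> a x /E Hx; apply/E; apply: SZ.
exists C; split=> //.
  by move=> x /E Sx Cx; apply: HI.
by move=> x; have [a [b [Sa Cb ->]]] := HD x; exists a, b; split=> //; apply/E.
Qed.

Lemma rickart_iso (A B : rmodType R) (e : {linear A -> B}) (d : {linear B -> A}) :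
  (forall b, e (d b) = b) -> (forall a, d (e a) = a) -> rickart A -> rickart B.
Proof.
move=> ed de HA phi.
pose psi := mkLin (lin_comp d (mkLin (lin_comp phi e))).
have [[S0 SD SZ] [C [HC HI HD]]] := HA psi.
have Hd b : d b = 0 -> b = 0 by move=> H; rewrite -(ed b) H linear0.
split; first exact: kernel_submod.
exists (fun b => C (d b)); split.
- case: HC => C0 CD CZ; split; first by rewrite linear0.
    by move=> x y Hx Hy; rewrite linearD; apply: CD.
  by move=> a x Hx; rewrite linearZ_LR; apply: CZ.
- move=> b Hb Cb; apply: Hd; apply: HI => //.
  by rewrite !mkLinE ed Hb linear0.
- move=> b; have [a [c [Sa Cc E]]] := HD (d b).
  exists (e a), (e c); split.
  + by move: Sa; rewrite !mkLinE => /Hd.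
  + by rewrite de.
  + by rewrite -linearD -E ed.
Qed.


Lemma rickart_ker (B C : rmodType R) (phi : {linear B -> C}) :
  rickart (B * C)%type -> direct_summand (fun b => phi b = 0).
Proof.
move=> HR.
have lpsi : linear (fun p : (B * C)%type => ((0 : B), phi p.1) : (B * C)%type).
  by move=> r x y; apply: injective_projections; rewrite /= ?scaler0 ?addr0 // linearP.
have [_ [D [[D0 DD DZ] HI HD]]] := HR (mkLin lpsi).
have Hk p : mkLin lpsi p = 0 <-> phi p.1 = 0.
  rewrite mkLinE; split; first by move/(congr1 snd).
  by case: p => p1 p2 /= H; apply: injective_projections => //=; rewrite H.
split; first exact: kernel_submod.
exists (fun b => exists c, D (b, c)); split.
- split; first by exists 0.
    by move=> x y [c Hc] [c' Hc']; exists (c + c'); exact: (DD _ _ Hc Hc').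
  by move=> a x [c Hc]; exists (a *: c); exact: (DZ a _ Hc).
- move=> b Hb [c Hc]; have := HI (b, c).
  by rewrite Hk => /(_ Hb Hc) /(congr1 fst).
- move=> b; have [[a1 a2] [[d1 d2] [/Hk Ha Hd E]]] := HD (b, 0).
  exists a1, d1; split=> //; first by exists d2.
  by move/(congr1 fst): E.
Qed.

Lemma image_submod (A B : rmodType R) (s : {linear A -> B}) :
  is_submod (fun x => exists q, s q = x).
Proof.
split; first by exists 0; rewrite linear0.
  by move=> x y [a <-] [b <-]; exists (a + b); rewrite linearD.
by move=> r x [a <-]; exists (r *: a); rewrite linearZ_LR.
Qed.

Lemma section_of (B K : rmodType R) (p : {linear B -> K}) :
  surj p -> direct_summand (fun b => p b = 0) ->
  exists s : {linear K -> B}, forall y, p (s y) = y.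
Proof.
move=> sp [_ [C [HC HI HD]]].
have H y : exists c, C c /\ p c = y.
  have [x <-] := sp y; have [a [c [Ha Hc ->]]] := HD x.
  by exists c; split=> //; rewrite linearD Ha add0r.
pose s y := proj1_sig (constructive_indefinite_description _ (H y)).
have sP y : C (s y) /\ p (s y) = y by rewrite /s; case: constructive_indefinite_description.
have ls : linear s.
  move=> r x y; apply/eqP; rewrite -subr_eq0; apply/eqP; apply: HI.
    by rewrite linearB linearP !(proj2 (sP _)) subrr.
  apply: (UB HC); first exact: (proj1 (sP _)).
  apply: (UD HC); last exact: (proj1 (sP _)).
  by apply: (UZ HC); exact: (proj1 (sP _)).
by exists (mkLin ls) => y; rewrite mkLinE (proj2 (sP y)).
Qed.

Lemma relproj_summand (A B : rmodType R) :
  relproj (A * B)%type (A * B)%type -> relproj A B.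
Proof.
move=> H L g f sg.
have lG : linear (fun p : (A * B)%type => g p.1) by move=> r x y; rewrite /= linearP.
have lF : linear (fun p : (A * B)%type => f p.2) by move=> r x y; rewrite /= linearP.
have sG : surj (mkLin lG) by move=> y; have [a <-] := sg y; exists (a, 0).
have [h Hh] := H L _ (mkLin lF) sG.
have lh : linear (fun b : B => (h ((0 : A), b)).1).
  move=> r x y.
  have -> : ((0 : A), r *: x + y) = r *: ((0 : A), x) + ((0 : A), y) :> (A * B)%type.
    by apply: injective_projections; rewrite /= ?scaler0 ?addr0.
  by rewrite linearP.
by exists (mkLin lh) => b; have := Hh (0, b); rewrite !mkLinE.
Qed.


Lemma split_summand (B K : rmodType R) (p : {linear B -> K}) (s : {linear K -> B}) :
  (forall y, p (s y) = y) -> direct_summand (fun b => p b = 0).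
Proof.
move=> ps; split; first exact: kernel_submod.
exists (fun x => exists q, s q = x); split; first exact: image_submod.
  by move=> x Hx [y Hy]; move: Hx; rewrite -Hy ps => ->; rewrite linear0.
move=> x; exists (x - s (p x)), (s (p x)); split.
- by rewrite linearB ps subrr.
- by exists (p x).
- by rewrite subrK.
Qed.

Lemma surj_summand (A B : rmodType R) (f : {linear A -> B}) :
  surj f -> direct_summand (fun y => exists x, f x = y).
Proof.
move=> sf; split; first exact: image_submod.
exists (fun y => y = 0); split.
- by split=> // [x y -> ->|a x ->]; rewrite ?addr0 ?scaler0.
- by [].
- by move=> x; exists x, 0; split=> //; rewrite addr0.
Qed.

Lemma inj_lin0 (A B : rmodType R) (f : {linear A -> B}) x : injective f -> f x = 0 -> x = 0.
Proof. by move=> injf H; apply: injf; rewrite H linear0. Qed.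

Lemma idlin (A : rmodType R) : linear (fun x : A => x). Proof. by []. Qed.

End Main.

Unset Implicit Arguments.
Local Open Scope ring_scope.
Theorem mainTheorem5 (R : pzRingType) (M : rmodType R) :
  [<-> quasi_proj M /\ fin_sigma_rickart M;
       forall X K : rmodType R, in_add M X -> fin_M_gen_sub M X K -> relproj M K;
       forall X K : rmodType R, in_add M X -> fin_M_gen_sub M X K -> quasi_proj K].
Proof.
tfae.
- move=> [qp rk] X K [n0 [hn0 [f [injf _]]]] [[i inji] [n [hn [p sp]]]].
  pose phi := mkLin (lin_comp f (mkLin (lin_comp i p))).
  have rk2 : rickart (dsum M n * dsum M n0)%type.
    apply: (rickart_iso (e := mkLin (@splitv_lin R M n n0)) (d := mkLin (@catv_lin R M n n0))).
    + by move=> b; rewrite !mkLinE splitvK.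
    + by move=> a; rewrite !mkLinE catvK.
    by apply: rk; rewrite addn_gt0 hn.
  have ds : direct_summand (fun b => p b = 0).
    apply: ds_ext (rickart_ker phi rk2) => b; rewrite !mkLinE; split.
      by move=> /(inj_lin0 injf) /(inj_lin0 inji).
    by move=> ->; rewrite !linear0.
  have [s Hs] := section_of sp ds.
  exact: (relproj_retract (s := s) (p := p) Hs (@relproj_dsumR R M M n qp)).
- move=> Hb X K Hadd Hgen; have HK := Hb X K Hadd Hgen.
  move: Hgen => [_ [n [hn [p sp]]]].
  exact: (relproj_epi sp (@relproj_dsumL R M K n HK)).
- move=> Hc; split.
  + apply: (Hc M M).
      have lc : linear (fun x : M => [ffun _ : 'I_1 => x]).
        by move=> r x y; apply/ffunP => j; rewrite !ffunE.
      exists 1%N; split=> //; exists (mkLin lc); split.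
        move=> x y E; have := congr1 (fun v : dsum M 1 => v ord0) E.
        by rewrite /= !ffunE.
      apply: surj_summand => v; exists (v ord0); rewrite mkLinE.
      by apply/ffunP => j; rewrite ffunE (ord1 j).
    split; first by exists (mkLin (@idlin R M)).
    have lp : linear (fun v : dsum M 1 => v ord0) by move=> r x y; rewrite !ffunE.
    exists 1%N; split=> //; exists (mkLin lp) => x.
    by exists [ffun _ => x]; rewrite mkLinE ffunE.
  + move=> n hn phi.
    pose HU := kernel_submod phi.
    have phic z : phi (val (mk HU z)) = phi z.
      apply/eqP; rewrite -subr_eq0 -linearB; apply/eqP; exact: (canonP HU).
    have mk0 : mk HU 0 = 0 by exact: (linear0 (mkLin (mk_lin HU))).
    have mkker x : mk HU x = 0 <-> phi x = 0.
      split; first by rewrite -mk0 => /mk_eqE; rewrite subr0.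
      by move=> H; rewrite -mk0; apply: mk_eq; rewrite subr0.
    have phiL r (q q' : quot HU) : phi (val (r *: q + q')) = r *: phi (val q) + phi (val q').
      by rewrite -[q]mkval -[q']mkval -(mk_lin HU) !phic linearP.
    pose K := (dsum M n * quot HU)%type.
    have li : linear (fun k : K => catv (k.1, phi (val k.2))).
      move=> r [a q] [a' q'] /=; rewrite -(catv_lin (T := M)); congr catv.
      by apply: injective_projections; [by [] | exact: phiL].
    have inji : injective (mkLin li).
      move=> [a q] [a' q']; rewrite !mkLinE => /(congr1 (@splitv _ _ n n)).
      rewrite !splitvK => -[-> E]; congr pair.
      rewrite -[q]mkval -[q']mkval; apply: mk_eq; rewrite linearB; apply/eqP; rewrite subr_eq0; apply/eqP; exact: E.
    have lp : linear (fun v : dsum M (n + n) => ((splitv v).1, mk HU (splitv v).2) : K).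
      move=> r x y; rewrite (splitv_lin (T := M)).
      by apply: injective_projections => //=; rewrite (mk_lin HU).
    have sp : surj (mkLin lp).
      move=> [a q]; exists (catv (a, val q)); rewrite mkLinE splitvK /=.
      by rewrite mkval.
    have HK : relproj K K.
      apply: (Hc (dsum M (n + n)) K).
        exists (n + n)%N; split; first by rewrite addn_gt0 hn.
        exists (mkLin (@idlin R (dsum M (n + n)))); split; first by [].
        by apply: surj_summand => v; exists v.
      split; first by exists (mkLin li).
      by exists (n + n)%N; split; [rewrite addn_gt0 hn | exists (mkLin lp)].
    have HQ := relproj_summand HK.
    have spi : surj (mkLin (mk_lin HU)) by move=> q; exists (val q); rewrite mkLinE mkval.
    have [s Hs] := HQ _ _ (mkLin (@idlin R (quot HU))) spi.
    apply: ds_ext (split_summand Hs) => x; rewrite mkLinE; exact: mkker.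
Qed.
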